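(* Let $G$ be a simple connected graph with $n$ vertices and $m$ edges, let $k\ge1$ be an integer, let $S_k(G)$ be the $k$-parallel subdivision graph of $G$, and let $N$ denote the set of the $km$ new (subdivision) vertices of $S_k(G)$, so $V(S_k(G))=V(G)\cup N$. Let $i\neq j$ be vertices of $S_k(G)$. Then: (1) If $i,j\in V(G)$, then $E_iT_j(S_k(G))=4E_iT_j(G)$. (2) If $i\in N$, $j\in V(G)$ and the two neighbours of $i$ in $S_k(G)$ are $s,t$, then $E_iT_j(S_k(G))=1+2E_sT_j(G)+2E_tT_j(G)$ and $E_jT_i(S_k(G))=2km-1+2\big[E_jT_s(G)+E_jT_t(G)\big]-\big[E_tT_s(G)+E_sT_t(G)\big]$. (3) If $i,j\in N$, the neighbours of $i$ in $S_k(G)$ are $s,t$ and the neighbours of $j$ are $p,q$, then $E_iT_j(S_k(G))=2km+E_sT_p(G)+E_sT_q(G)+E_tT_p(G)+E_tT_q(G)-E_qT_p(G)-E_pT_q(G)$ and $E_jT_i(S_k(G))=2km+E_pT_s(G)+E_qT_s(G)+E_pT_t(G)+E_qT_t(G)-E_tT_s(G)-E_sT_t(G)$.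
   Context: The $k$-parallel subdivision graph $S_k(G)$ is obtained from $G$ by replacing each edge $uv$ of $G$ by $k$ internally disjoint paths $u-w-v$ of length $2$ (each with its own new middle vertex $w$); the two neighbours of a new vertex $w$ are the endpoints $u,v$ of the corresponding edge of $G$. For a connected graph $H$ and vertices $a,b$, $E_aT_b(H)$ denotes the expected hitting time: the expected number of steps the simple random walk on $H$ started at $a$ needs to first reach $b$ (with $E_aT_a(H)=0$). *)

(* Defs.v *)
From HB Require Import structures.
From mathcomp Require Import all_boot all_order all_algebra.
From mathcomp Require Import boolp classical_sets reals ereal topology normedtype sequences.
Set Implicit Arguments. Unset Strict Implicit. Unset Printing Implicit Defensive.
Import Order.TTheory GRing.Theory Num.Theory.
Local Open Scope ring_scope.

Definition deg (V : finType) (adj : rel V) (x : V) : nat := #|[set y | adj x y]|.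

(* fpt adj b t a = probability that the simple random walk started at a
   first reaches b at exactly step t (first-passage distribution). *)
Fixpoint fpt (R : realType) (V : finType) (adj : rel V) (b : V) (t : nat) (a : V) : R :=
  match t with
  | 0 => (a == b)%:R
  | t'.+1 => if a == b then 0
             else \sum_(y | adj a y) ((deg adj a)%:R^-1 * fpt R adj b t' y)
  end.

Definition hitting_time (R : realType) (V : finType) (adj : rel V) (a b : V) : R :=
  fine (\sum_(t <oo) ((t%:R * fpt R adj b t a)%:E))%E.

Definition is_edge (T : finType) (e : rel T) (E : {set T}) : bool :=
  [exists u, exists v, e u v && (E == [set u; v])].

Definition edgeT (T : finType) (e : rel T) := {E : {set T} | is_edge e E}.

Definition num_edges (T : finType) (e : rel T) : nat := #|[set E : {set T} | is_edge e E]|.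

(* Vertices of S_k(G): old vertices (inl) and new vertices (inr (edge, copy index)). *)
Definition SkV (T : finType) (e : rel T) (k : nat) : finType :=
  (T + (edgeT e * 'I_k))%type.

Definition Sk_adj (T : finType) (e : rel T) (k : nat) : rel (SkV e k) :=
  fun x y => match x, y with
  | inl u, inr p => u \in val p.1
  | inr p, inl u => u \in val p.1
  | _, _ => false
  end.

(* Main.v *)
Require Import Defs.
From HB Require Import structures.
From mathcomp Require Import all_boot all_order all_algebra.
From mathcomp Require Import boolp classical_sets reals ereal topology normedtype sequences.
From mathcomp Require Import ring lra.
Import Order.TTheory GRing.Theory Num.Theory.
Import numFieldNormedType.Exports.
Local Open Scope ring_scope.

Section Walk.
Variables (R : realType) (V : finType) (adj : rel V) (b : V).
Hypothesis conn : forall x y, connect adj x y.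

Local Notation fp := (fpt R adj b).
Local Notation dg a := ((deg adj a)%:R : R).

Lemma deg_sum a : dg a = \sum_(y | adj a y) 1.
Proof.
rewrite /deg. rewrite (eq_bigl (fun y => y \in [set y | adj a y])); last by move=> y; rewrite inE.
by rewrite sumr_const.
Qed.

Lemma deg_gt0 a : a != b -> (0 < deg adj a)%N.
Proof.
move=> ab; move/connectP: (conn a b) => [[|y p] /= pth lst].
  by rewrite lst eqxx in ab.
move/andP: pth => [ay _]; rewrite /deg card_gt0; apply/set0Pn; exists y; by rewrite inE.
Qed.

Lemma dg_gt0 a : a != b -> 0 < dg a.
Proof. by move=> ab; rewrite ltr0n deg_gt0. Qed.

Lemma sum_inv_deg a : a != b -> \sum_(y | adj a y) (dg a)^-1 = 1.
Proof.
move=> ab.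
have -> : \sum_(y | adj a y) (dg a)^-1 = (dg a)^-1 * \sum_(y | adj a y) 1.
  rewrite big_distrr; apply: eq_bigr => * /=. by rewrite mulr1.
rewrite -deg_sum mulVf // pnatr_eq0 -lt0n deg_gt0 //.
Qed.

Lemma fpt_ge0 t a : 0 <= fp t a.
Proof.
elim: t a => [|t IH] a /=; first by rewrite ler0n.
case: ifP => _ //; apply: sumr_ge0 => y _; apply: mulr_ge0 => //; rewrite invr_ge0 ler0n //.
Qed.

Definition Fs n a : R := \sum_(0 <= t < n) fp t a.
Definition us n a : R := 1 - Fs n a.
Definition Ps n a : R := \sum_(0 <= t < n) (t%:R * fp t a).

Lemma Fs_rec n a : Fs n.+1 a = if a == b then 1 else \sum_(y | adj a y) (dg a)^-1 * Fs n y.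
Proof.
rewrite /Fs big_nat_recl //=.
have [eab|ab] := eqVneq a b; first by rewrite big1_eq addr0.
rewrite add0r exchange_big /=; apply: eq_bigr => y _; by rewrite big_distrr.
Qed.

Lemma Ps_rec n a : Ps n.+1 a = if a == b then 0 else
   \sum_(y | adj a y) (dg a)^-1 * (Ps n y + Fs n y).
Proof.
rewrite /Ps big_nat_recl //= mul0r add0r.
have [eab|ab] := eqVneq a b; first by rewrite big1 // => i _; rewrite mulr0.
under eq_bigr do rewrite big_distrr /=.
rewrite exchange_big /=; apply: eq_bigr => y _.
rewrite /Fs -big_split /= big_distrr /=; apply: eq_bigr => i _.
rewrite -[i.+1]addn1 natrD; lra.
Qed.

Lemma invdeg_ge0 a : 0 <= (dg a)^-1.
Proof. by rewrite invr_ge0 ler0n. Qed.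

Lemma mulinv_le a x y : x <= y -> (dg a)^-1 * x <= (dg a)^-1 * y.
Proof. move=> h; apply: ler_wpM2l => //; exact: invdeg_ge0. Qed.

Lemma Fs_ge0 n a : 0 <= Fs n a.
Proof. by apply: sumr_ge0 => t _; apply: fpt_ge0. Qed.

Lemma Fs_le1 n a : Fs n a <= 1.
Proof.
elim: n a => [|n IH] a; first by rewrite /Fs big_geq // ler01.
rewrite Fs_rec; have [eab|ab] := eqVneq a b => //.
rewrite -[X in _ <= X](sum_inv_deg _ ab); apply: ler_sum => y _.
rewrite -[X in _ <= X]mulr1; exact: mulinv_le.
Qed.

Lemma us_ge0 n a : 0 <= us n a.
Proof. by rewrite /us subr_ge0 Fs_le1. Qed.

Lemma us_le1 n a : us n a <= 1.
Proof. by rewrite /us lerBlDr lerDl Fs_ge0. Qed.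

Lemma us0 a : us 0 a = 1.
Proof. by rewrite /us /Fs big_geq // subr0. Qed.

Lemma us_rec n a : us n.+1 a = if a == b then 0 else \sum_(y | adj a y) (dg a)^-1 * us n y.
Proof.
rewrite /us Fs_rec; have [eab|ab] := eqVneq a b; first by rewrite subrr.
under [X in _ = X]eq_bigr do rewrite mulrBr mulr1.
by rewrite sumrB (sum_inv_deg _ ab).
Qed.

Lemma us_mono n a : us n.+1 a <= us n a.
Proof.
have := fpt_ge0 n a; rewrite /us /Fs big_nat_recr //=; lra.
Qed.

Lemma us_monoW m n a : (m <= n)%N -> us n a <= us m a.
Proof.
move=> mn; rewrite -(subnKC mn); elim: (n - m)%N => [|j IH]; first by rewrite addn0.
by rewrite addnS (le_trans (us_mono _ _)).
Qed.

Lemma avg_split a y (f : V -> R) F : a != b -> adj a y -> (forall z, f z <= F) ->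
  \sum_(z | adj a z) (dg a)^-1 * f z <= (dg a)^-1 * f y + (1 - (dg a)^-1) * F.
Proof.
move=> ab ay fF.
have hs := sum_inv_deg _ ab; rewrite (bigD1 y) //= in hs.
have -> : 1 - (dg a)^-1 = \sum_(z | adj a z && (z != y)) (dg a)^-1 by move: hs; lra.
rewrite (bigD1 y) //= lerD2l.
rewrite big_distrl /=; apply: ler_sum => z _; exact: mulinv_le.
Qed.

Lemma us_mul s c : 0 <= c -> (forall z, us s z <= c) -> forall t a, us (t + s) a <= c * us t a.
Proof.
move=> c0 sc; elim=> [|t IH] a; first by rewrite add0n us0 mulr1.
rewrite addSn !us_rec; have [eab|ab] := eqVneq a b; first by rewrite mulr0.
rewrite big_distrr /=; apply: ler_sum => y _.
rewrite mulrCA; exact: mulinv_le.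
Qed.

Let N := #|V|.
Let c : R := (N%:R)^-1.

Lemma c_gt0 : 0 < c.
Proof. by rewrite /c invr_gt0 ltr0n /N; apply/card_gt0P; exists b. Qed.

Lemma N_gt0 : (0 < N)%N.
Proof. by rewrite /N; apply/card_gt0P; exists b. Qed.

Lemma c_le1 : c <= 1.
Proof. by rewrite /c invf_le1 ?ltr0n ?N_gt0 // ler1n N_gt0. Qed.

Lemma c_le_invdeg a : a != b -> c <= (dg a)^-1.
Proof.
move=> ab; rewrite /c lef_pV2 ?posrE ?ltr0n ?N_gt0 ?deg_gt0 //.
by rewrite ler_nat /deg /N max_card.
Qed.

Lemma path_bound p : forall a, path adj a p -> last a p = b ->
  us (size p).+1 a <= 1 - c ^+ size p.
Proof.
have c0 := ltW c_gt0.
elim: p => [|y p IH] a /=.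
  by move=> _ ->; rewrite us_rec eqxx expr0 subrr.
move=> /andP[ay py] ly; rewrite us_rec.
have [eab|ab] := eqVneq a b.
  by rewrite subr_ge0 exprn_ile1 // c_le1.
have h1 := @avg_split a y (us (size p).+1) 1 ab ay (fun z => us_le1 _ z).
have h2 := IH y py ly.
have h3 := c_le_invdeg _ ab.
have h4 : 0 <= c ^+ size p by rewrite exprn_ge0.
have h5 : c * c ^+ size p <= (dg a)^-1 * c ^+ size p by rewrite ler_wpM2r.
have h6 : (dg a)^-1 * us (size p).+1 y <= (dg a)^-1 * (1 - c ^+ size p) by exact: mulinv_le.
rewrite exprS; apply: (le_trans h1); move: h5 h6; set u := (dg a)^-1; set w := c ^+ size p.
move=> h5 h6; nra.
Qed.

Let rho : R := 1 - c ^+ N.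

Lemma rho_ge0 : 0 <= rho.
Proof. by rewrite /rho subr_ge0 exprn_ile1 // ?c_le1 // ltW // c_gt0. Qed.

Lemma rho_lt1 : rho < 1.
Proof. rewrite /rho; have := exprn_gt0 N c_gt0; lra. Qed.

Lemma usN a : us N a <= rho.
Proof.
move/connectP: (conn a b) => [p pth lst].
move: lst; case: (shortenP pth) => p' pth' uq _ lst'.
have hs : (size p' < N)%N.
  by move/card_uniqP: uq => /= <-; rewrite /N max_card.
apply: le_trans (@us_monoW (size p').+1 N a hs) _.
apply: le_trans (@path_bound p' a pth' (esym lst')) _.
rewrite /rho; suff : c ^+ N <= c ^+ size p' by lra.
apply: ler_wiXn2l; [exact: ltW c_gt0 | exact: c_le1 | exact: ltnW].
Qed.

Lemma us_geom K a : us (K * N) a <= rho ^+ K.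
Proof.
elim: K a => [|K IH] a; first by rewrite mul0n us0 expr0.
rewrite mulSn addnC exprS.
apply: le_trans (@us_mul N rho rho_ge0 usN (K * N) a) _.
by apply: ler_wpM2l; [exact: rho_ge0 | exact: IH].
Qed.

Lemma us_sum_geom K a : (1 - rho) * \sum_(0 <= t < K * N) us t a <= N%:R * (1 - rho ^+ K).
Proof.
elim: K => [|K IH]; first by rewrite mul0n big_geq // mulr0 expr0 subrr mulr0.
rewrite mulSn addnC (big_cat_nat _ (leq_addr _ _)) //=.
have h : \sum_(K * N <= t < K * N + N) us t a <= N%:R * rho ^+ K.
  apply: (@le_trans _ _ (\sum_(K * N <= t < K * N + N) rho ^+ K)).
    rewrite big_nat_cond [X in _ <= X]big_nat_cond; apply: ler_sum => t /andP[/andP[h1 _] _].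
    apply: le_trans (us_geom K a); exact: us_monoW.
  by rewrite sumr_const_nat addKn mulr_natl.
have r1 := rho_lt1; have r0 := rho_ge0.
have hr : 0 <= 1 - rho by lra.
have h' := ler_wpM2l hr h.
rewrite mulrDr exprS; move: IH h'; set A := \sum_(_ <= _ < _) _; set B := \sum_(_ <= _ < _) _.
move=> IH h'; nra.
Qed.

Definition Bd := N%:R / (1 - rho).

Lemma us_sum_le n a : \sum_(0 <= t < n) us t a <= Bd.
Proof.
have r1 := rho_lt1; have r0 := rho_ge0.
have hr : 0 < 1 - rho by lra.
have hn : (n <= n * N)%N by rewrite leq_pmulr // N_gt0.
apply: (@le_trans _ _ (\sum_(0 <= t < n * N) us t a)).
  rewrite (big_cat_nat (leq0n n) hn) //= lerDl; apply: sumr_ge0 => t _; exact: us_ge0.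
rewrite /Bd ler_pdivlMr // mulrC; apply: le_trans (us_sum_geom n a) _.
rewrite -[X in _ <= X]mulr1; apply: ler_wpM2l; first by rewrite ler0n.
have := exprn_ge0 n r0; lra.
Qed.

Lemma fp_us t a : fp t a = us t a - us t.+1 a.
Proof. by rewrite /us /Fs big_nat_recr //=; lra. Qed.

Lemma Ps_id n a : Ps n a + n%:R * us n a = \sum_(0 <= t < n) us t.+1 a.
Proof.
elim: n => [|n IH]; first by rewrite /Ps !big_geq // mul0r addr0.
rewrite /Ps big_nat_recr //= -/(Ps n a) big_nat_recr //= -IH fp_us -[n.+1]addn1 natrD.
lra.
Qed.

Lemma Ps_le n a : Ps n a <= Bd.
Proof.
have := Ps_id n a; have := us_sum_le n.+1 a; rewrite big_nat_recl //= us0.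
have := us_ge0 n a; have : 0 <= n%:R :> R by rewrite ler0n.
nra.
Qed.

Lemma nus_le n a : n%:R * us n a <= Bd.
Proof.
have := Ps_id n a; have := us_sum_le n.+1 a; rewrite big_nat_recl //= us0.
have : 0 <= Ps n a by apply: sumr_ge0 => t _; apply: mulr_ge0; [rewrite ler0n | exact: fpt_ge0].
lra.
Qed.

Lemma Ps_nd a : {homo (Ps ^~ a) : n m / (n <= m)%N >-> n <= m}.
Proof.
move=> n m nm /=; rewrite /Ps (big_cat_nat (leq0n n) nm) //= lerDl.
by apply: sumr_ge0 => t _; apply: mulr_ge0; [rewrite ler0n | exact: fpt_ge0].
Qed.

Lemma Ps_cvg a : cvgn (Ps ^~ a).
Proof.
apply: nondecreasing_is_cvgn; first exact: Ps_nd.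
by exists Bd => _ [n _ <-]; exact: Ps_le.
Qed.

Lemma hit_lim a : hitting_time R adj a b = limn (Ps ^~ a).
Proof.
rewrite /hitting_time.
have -> : (fun n => (\sum_(0 <= t < n) (t%:R * fp t a)%:E)%E) = EFin \o (Ps ^~ a).
  by apply: funext => n /=; rewrite sumEFin.
rewrite EFin_lim //; exact: Ps_cvg.
Qed.

Lemma us_cvg0 a : ((us ^~ a) @ \oo --> (0:R))%classic.
Proof.
rewrite -cvg_shiftS.
apply: (@squeeze_cvgr _ _ _ _ (fun=> 0) (fun n => Bd * harmonic n)).
- apply: nearW => n /=; rewrite us_ge0 /=.
  have h := nus_le n.+1 a.
  rewrite /harmonic /= ler_pdivlMr ?ltr0n // mulrC; exact: h.
- exact: cvg_cst.
- rewrite -[X in (_ --> X)%classic](mulr0 Bd); apply: cvgMl_tmp; exact: cvg_harmonic.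
Qed.

Lemma hit_rec_lim a : a != b ->
  limn (Ps^~a) = 1 + \sum_(y | adj a y) (dg a)^-1 * limn (Ps^~y).
Proof.
move=> ab.
have L1 : ((fun n => Ps n.+1 a) @ \oo --> limn (Ps^~a))%classic.
  have h : (Ps^~a @ \oo --> limn (Ps^~a))%classic := Ps_cvg a.
  by rewrite -cvg_shiftS in h.
have E : (fun n => Ps n.+1 a) =
   (fun n => \sum_(y | adj a y) (dg a)^-1 * (Ps n y + (1 - us n y))).
  apply: funext => n; rewrite Ps_rec (negbTE ab); apply: eq_bigr => y _.
  by rewrite /us; congr (_ * (_ + _)); lra.
rewrite E in L1.
have L2 : ((fun n => \sum_(y | adj a y) (dg a)^-1 * (Ps n y + (1 - us n y))) @ \oo -->
   \sum_(y | adj a y) (dg a)^-1 * (limn (Ps^~y) + (1 - 0)))%classic.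
  apply: cvg_big => [|y _]; first exact: add_continuous.
  apply: cvgMl_tmp; apply: cvgD; first exact: Ps_cvg.
  apply: cvgB; [exact: cvg_cst | exact: us_cvg0].
rewrite (cvg_unique _ L1 L2) //.
under eq_bigr do rewrite subr0 mulrDr mulr1.
by rewrite big_split /= (sum_inv_deg _ ab) addrC.
Qed.

Lemma Ps_b n : Ps n b = 0.
Proof. by case: n => [|n]; [rewrite /Ps big_geq | rewrite Ps_rec eqxx]. Qed.

Lemma hit_b : hitting_time R adj b b = 0.
Proof.
rewrite hit_lim; have -> : Ps^~b = fun=> 0 by apply: funext => n; exact: Ps_b.
exact: lim_cst.
Qed.

Lemma hit_rec a : a != b ->
  hitting_time R adj a b = 1 + \sum_(y | adj a y) (dg a)^-1 * hitting_time R adj y b.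
Proof.
move=> ab; rewrite hit_lim hit_rec_lim //; congr (_ + _); apply: eq_bigr => y _.
by rewrite hit_lim.
Qed.

Lemma harm_le0 (g : V -> R) : g b = 0 ->
  (forall a, a != b -> g a = \sum_(y | adj a y) (dg a)^-1 * g y) -> forall a, g a <= 0.
Proof.
move=> gb gh.
case: (@arg_maxP _ R V b xpredT g isT) => a0 _ Hmax.
have Hm : forall j, g j <= g a0 by move=> j; exact: Hmax.
suff : g a0 <= 0 by move=> h a; exact: le_trans (Hm a) h.
have key : forall p x, path adj x p -> last x p = b -> g x = g a0 -> g a0 <= 0.
  elim=> [|y p IH] x /=; first by move=> _ -> <-; rewrite gb.
  move=> /andP[xy py] ly gx.
  have [exb|xb] := eqVneq x b; first by rewrite -gx exb gb.
  apply: (IH y py ly); apply/eqP; rewrite eq_le Hm /=.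
  have h1 := @avg_split x y g (g a0) xb xy Hm.
  rewrite -gh // gx in h1.
  have h2 := dg_gt0 _ xb.
  have h3 : 0 < (dg x)^-1 by rewrite invr_gt0.
  move: h1; set u := (dg x)^-1 => h1.
  have : u * g a0 <= u * g y by move: h1; nra.
  by rewrite ler_pM2l.
move/connectP: (conn a0 b) => [p pth lst].
exact: key p a0 pth (esym lst) erefl.
Qed.

Lemma hit_unique (h : V -> R) : h b = 0 ->
  (forall a, a != b -> h a = 1 + \sum_(y | adj a y) (dg a)^-1 * h y) ->
  forall a, hitting_time R adj a b = h a.
Proof.
move=> hb hr a.
pose HT x := hitting_time R adj x b.
have g1 := @harm_le0 (fun x => h x - HT x).
have g2 := @harm_le0 (fun x => HT x - h x).
have e1 : forall x, x != b -> h x - HT x = \sum_(y | adj x y) (dg x)^-1 * (h y - HT y).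
  move=> x xb; rewrite hr // /HT hit_rec //.
  under [X in _ = X]eq_bigr do rewrite mulrBr.
  rewrite sumrB; lra.
have e2 : forall x, x != b -> HT x - h x = \sum_(y | adj x y) (dg x)^-1 * (HT y - h y).
  move=> x xb; rewrite hr // /HT hit_rec //.
  under [X in _ = X]eq_bigr do rewrite mulrBr.
  rewrite sumrB; lra.
have := g1 _ e1 a; have := g2 _ e2 a; rewrite /HT hb hit_b ?subrr //.
rewrite -/(HT a); lra.
Qed.
End Walk.
Section Edges.
Variables (T : finType) (e : rel T).
Hypothesis e_sym : symmetric e.
Hypothesis e_irr : irreflexive e.

Lemma edge_other (E : edgeT e) x : x \in val E ->
  exists o, forall w, (e x w && (val E == [set x; w])) = (w == o).
Proof.
case: E => E /= /existsP[u /existsP[v /andP[euv /eqP ->]]].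
have uv : u != v by apply/eqP => h; rewrite h e_irr in euv.
rewrite !inE => /orP[/eqP->|/eqP->].
  exists v => w; have [->|wv] := eqVneq w v; first by rewrite euv eqxx.
  apply: negbTE; apply/negP => /andP[_ /eqP /setP /(_ v)]; rewrite !inE eqxx orbT /= => /esym/orP[].
    by rewrite eq_sym (negbTE uv).
  by rewrite eq_sym (negbTE wv).
exists u => w; have [->|wu] := eqVneq w u; first by rewrite e_sym euv /=; apply/eqP/setP => z; rewrite !inE orbC.
apply: negbTE; apply/negP => /andP[_ /eqP/setP/(_ u)]; rewrite !inE eqxx /= => /esym/orP[].
  by rewrite (negbTE uv).
by rewrite eq_sym (negbTE wu).
Qed.

Lemma edge_sum (R : realType) x (F : {set T} -> R) :
  \sum_(E : edgeT e | x \in val E) F (val E) = \sum_(w | e x w) F [set x; w].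
Proof.
have step : forall w, e x w -> F [set x; w] = \sum_(E : edgeT e | val E == [set x; w]) F (val E).
  move=> w xw.
  have pf : is_edge e [set x; w] by apply/existsP; exists x; apply/existsP; exists w; rewrite xw eqxx.
  rewrite (big_pred1 (exist _ [set x; w] pf)) //.
rewrite [RHS](eq_bigr _ step).
rewrite (exchange_big_dep (fun E : edgeT e => x \in val E)) /=; last first.
  by move=> w E _ /eqP ->; rewrite !inE eqxx.
apply: eq_bigr => E xE.
have [o Ho] := @edge_other E x xE.
by rewrite (big_pred1 o).
Qed.

Lemma deg_sumR (R : realType) (V : finType) (adj : rel V) a :
  (deg adj a)%:R = \sum_(y | adj a y) (1 : R).
Proof.
rewrite /deg. rewrite (eq_bigl (fun y => y \in [set y | adj a y])); last by move=> y; rewrite inE.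
by rewrite sumr_const.
Qed.

Lemma edge_card (E : edgeT e) : #|val E| = 2%N.
Proof.
case: E => E /= /existsP[u /existsP[v /andP[euv /eqP ->]]].
have uv : u != v by apply/eqP => h; rewrite h e_irr in euv.
by rewrite cards2 uv.
Qed.

Lemma handshake (R : realType) : \sum_x ((deg e x)%:R : R) = 2 * (num_edges e)%:R.
Proof.
under eq_bigr do rewrite deg_sumR -(edge_sum R _ (fun _ => 1)).
rewrite (exchange_big_dep xpredT) //=.
under eq_bigr => E _ do rewrite sumr_const edge_card.
rewrite sumr_const card_sig /num_edges cardsE.
by rewrite mulr_natr.
Qed.
End Edges.

Section GraphH.
Variables (R : realType) (T : finType) (e : rel T).
Hypotheses (e_sym : symmetric e) (e_irr : irreflexive e) (e_conn : forall x y, connect e x y).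
Local Notation HG x z := (hitting_time R e x z).
Local Notation dG x := ((deg e x)%:R : R).
Let Dsum := \sum_x dG x.

Lemma dG_neq0 x z : x != z -> dG x != 0.
Proof. by move=> xz; rewrite pnatr_eq0 -lt0n (@deg_gt0 T e z e_conn x xz). Qed.

Lemma HG_rec_mul x z : x != z -> \sum_(w | e x w) HG w z = dG x * (HG x z - 1).
Proof.
move=> xz; rewrite (@hit_rec R T e z e_conn x xz) addrC addKr big_distrr /=.
apply: eq_bigr => w _; by rewrite mulrA mulfV ?mul1r // (@dG_neq0 x z xz).
Qed.

Lemma HG_sum_self z : \sum_(w | e z w) HG w z = Dsum - dG z.
Proof.
have A : \sum_a dG a * HG a z = \sum_a \sum_(w | e a w) HG w z.
  rewrite (exchange_big_dep xpredT) //=; apply: eq_bigr => w _.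
  rewrite deg_sumR big_distrl /=; under eq_bigr do rewrite mul1r.
  by apply: eq_bigl => a; rewrite e_sym.
rewrite (bigD1 z) //= [RHS](bigD1 z) //= (@hit_b R T e z e_conn) mulr0 add0r in A.
have B : \sum_(a | a != z) dG a * HG a z = \sum_(a | a != z) \sum_(w | e a w) HG w z + \sum_(a | a != z) dG a.
  rewrite -big_split /=; apply: eq_bigr => a az; rewrite HG_rec_mul //; ring.
have D : Dsum = dG z + \sum_(a | a != z) dG a by rewrite /Dsum (bigD1 z).
rewrite D; move: A B; lra.
Qed.

Lemma LapG x z : \sum_(w | e x w) HG w z = dG x * (HG x z - 1) + (x == z)%:R * Dsum.
Proof.
have [->|xz] := eqVneq x z; last by rewrite HG_rec_mul // mul0r addr0.
by rewrite HG_sum_self (@hit_b R T e z e_conn) mul1r; ring.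
Qed.

Lemma Dsum_eq : Dsum = 2 * (num_edges e)%:R.
Proof. exact: handshake. Qed.

Variables (k : nat) (k_pos : (0 < k)%N).
Local Notation S := (@Sk_adj T e k).

Lemma S_sum_inl x (F : SkV e k -> R) :
  \sum_(y | S (inl x) y) F y = \sum_(p : edgeT e * 'I_k | x \in val p.1) F (inr p).
Proof. by rewrite big_sumType /= big_pred0_eq add0r. Qed.

Lemma S_sum_inr p (F : SkV e k -> R) :
  \sum_(y | S (inr p) y) F y = \sum_(u | u \in val p.1) F (inl u).
Proof. by rewrite big_sumType /= big_pred0_eq addr0. Qed.

Lemma pair_sum x (G : {set T} -> R) :
  \sum_(p : edgeT e * 'I_k | x \in val p.1) G (val p.1) = k%:R * \sum_(w | e x w) G [set x; w].
Proof.
rewrite -(@edge_sum T e e_sym e_irr R x G) big_distrr /=.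
rewrite (eq_bigr (fun E => \sum_(i : 'I_k) G (val E))); last first.
  by move=> E _; rewrite sumr_const card_ord mulr_natl.
rewrite pair_big /=; apply: eq_bigl => p; by rewrite andbT.
Qed.

Lemma set2_sum (F : T -> R) x w : x != w -> \sum_(z in [set x; w]) F z = F x + F w.
Proof. by move=> xw; rewrite big_setU1 /= ?inE // big_set1. Qed.

Lemma edge_of_sum (E : edgeT e) (F : T -> R) : exists u v, u != v /\ val E = [set u; v] /\
  \sum_(z in val E) F z = F u + F v.
Proof.
case: E => E /= /existsP[u /existsP[v /andP[euv /eqP ->]]].
have uv : u != v by apply/eqP => h; rewrite h e_irr in euv.
by exists u, v; split=> //; split=> //; rewrite set2_sum.
Qed.

Lemma dS_inl x : ((deg S (inl x))%:R : R) = k%:R * dG x.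
Proof.
rewrite deg_sumR S_sum_inl (pair_sum x (fun _ => 1)) deg_sumR //.
Qed.

Lemma dS_inr p : ((deg S (inr p))%:R : R) = 2.
Proof.
rewrite deg_sumR S_sum_inr; have [u [v [uv [_ ->]]]] := edge_of_sum p.1 (fun _ => 1).
by rewrite -(natrD _ 1 1).
Qed.


Lemma S_conn : forall x y : SkV e k, connect S x y.
Proof.
pose i0 : 'I_k := Ordinal k_pos.
have ll : forall u v, connect S (inl u) (inl v).
  move=> u v; move/connectP: (e_conn u v) => [p pth ->].
  elim: p u pth => [|w p IH] u /=; first by rewrite connect0.
  move=> /andP[uw pth].
  have pf : is_edge e [set u; w] by apply/existsP; exists u; apply/existsP; exists w; rewrite uw eqxx.
  apply: connect_trans (IH w pth).
  apply: (connect_trans (y := inr (exist _ [set u; w] pf, i0))); apply: connect1.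
    by rewrite /= !inE eqxx.
  by rewrite /= !inE eqxx orbT.
have ex : forall p : edgeT e * 'I_k, exists u, u \in val p.1.
  move=> p; have [u [v [_ [-> _]]]] := edge_of_sum p.1 (fun _ => 0).
  by exists u; rewrite !inE eqxx.
have rl : forall (p : edgeT e * 'I_k) u, u \in val p.1 -> connect S (inr p) (inl u).
  by move=> p u up; apply: connect1.
have lr : forall (p : edgeT e * 'I_k) u, u \in val p.1 -> connect S (inl u) (inr p).
  by move=> p u up; apply: connect1.
case=> [u|p] [v|q].
- exact: ll.
- have [w wq] := ex q; exact: connect_trans (ll u w) (lr _ _ wq).
- have [w wp] := ex p; exact: connect_trans (rl _ _ wp) (ll w v).
- have [w wp] := ex p; have [w' wq] := ex q.
  exact: connect_trans (rl _ _ wp) (connect_trans (ll w w') (lr _ _ wq)).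
Qed.

Lemma sum_aff x (G : T -> R) A B F : (forall w, G w = A + B * F w) ->
  \sum_(w | e x w) G w = dG x * A + B * \sum_(w | e x w) F w.
Proof.
move=> hG; rewrite (eq_bigr _ (fun w _ => hG w)) big_split /= -big_distrr /=.
by rewrite deg_sumR big_distrl /=; under [in RHS]eq_bigr do rewrite mul1r.
Qed.

Lemma endpoints (p : edgeT e * 'I_k) s t :
  (forall x, S (inr p) x = (x == inl s) || (x == inl t)) -> val p.1 = [set s; t].
Proof.
move=> H; apply/setP => u; have := H (inl u); rewrite /= => ->; by rewrite !inE.
Qed.


Lemma dpos (a0 b0 : T) : a0 != b0 -> forall x, dG x != 0.
Proof.
move=> ab x; have [xa|xa] := eqVneq x a0.
  by apply: (@dG_neq0 x b0); rewrite xa.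
exact: (@dG_neq0 x a0 xa).
Qed.

Lemma kR_neq0 : (k%:R : R) != 0.
Proof. by rewrite pnatr_eq0 -lt0n. Qed.

Definition f1 v (y : SkV e k) : R := match y with
  | inl x => 4 * HG x v
  | inr p => 1 + 2 * \sum_(z in val p.1) HG z v end.

Lemma part1 v (a0 b0 : T) : a0 != b0 -> forall y, hitting_time R S y (inl v) = f1 v y.
Proof.
move=> ab; have dp := @dpos a0 b0 ab; have kp := kR_neq0.
apply: (@hit_unique R (SkV e k) S (inl v) S_conn (f1 v)).
  by rewrite /= (@hit_b R T e v e_conn) mulr0.
case=> [x|p] hx.
  have xv : x != v by apply: contraNneq hx => ->.
  rewrite S_sum_inl dS_inl /=.
  rewrite (pair_sum x (fun E => (k%:R * dG x)^-1 * (1 + 2 * \sum_(z in E) HG z v))).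
  rewrite (eq_bigr (fun w => (k%:R * dG x)^-1 * (1 + 2 * (HG x v + HG w v)))); last first.
    move=> w xw; rewrite set2_sum //; apply/eqP => h; by rewrite h e_irr in xw.
  rewrite -big_distrr /= (@sum_aff x _ (1 + 2 * HG x v) 2 (fun w => HG w v)); last by move=> w; ring.
  rewrite LapG (negbTE xv) mul0r addr0.
  have := dp x; move: (dG x) (HG x v) => d h dn.
  by field; rewrite kp dn.
rewrite S_sum_inr dS_inr /= big_distrr /=; congr (_ + _); apply: eq_bigr => z _.
by field.
Qed.


Definition Cst s t : R := (2 * k * num_edges e)%:R - 1 - (HG t s + HG s t).

Definition gE s t (E : {set T}) : R :=
  1 + 2^-1 * \sum_(z in E) (Cst s t + 2 * (HG z s + HG z t)).

Definition f2 s t p0 (y : SkV e k) : R := match y with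
  | inl x => Cst s t + 2 * (HG x s + HG x t)
  | inr p => if p == p0 then 0 else gE s t (val p.1) end.

Lemma part2 s t p0 : s != t -> val p0.1 = [set s; t] ->
  forall y, hitting_time R S y (inr p0) = f2 s t p0 y.
Proof.
move=> st hP; have dp := @dpos s t st; have kp := kR_neq0.
apply: (@hit_unique R (SkV e k) S (inr p0) S_conn (f2 s t p0)).
  by rewrite /= eqxx.
case=> [x|p] hx; last first.
  have pp : p != p0 by apply: contraNneq hx => ->.
  rewrite /= (negbTE pp) S_sum_inr dS_inr /= /gE big_distrr /=.
  by congr (_ + _); apply: eq_bigr => z _.
rewrite S_sum_inl dS_inl.
set c := (k%:R * dG x)^-1.
have key : \sum_(p : edgeT e * 'I_k | x \in val p.1) c * f2 s t p0 (inr p) =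
    \sum_(p : edgeT e * 'I_k | x \in val p.1) c * gE s t (val p.1)
    - (x \in [set s; t])%:R * (c * gE s t [set s; t]).
  case: (boolP (x \in [set s; t])) => xP.
    have xp0 : x \in val p0.1 by rewrite hP.
    rewrite (bigD1 p0) //= eqxx mulr0 add0r [X in _ = X - _](bigD1 p0) //= hP mul1r addrAC subrr add0r.
    by apply: eq_bigr => p /andP[_ /negbTE ->].
  rewrite mul0r subr0; apply: eq_bigr => p xp /=.
  case: eqP => // ep; by move: xP; rewrite -hP -ep xp.
rewrite key (pair_sum x (fun E => c * gE s t E)).
rewrite (eq_bigr (fun w => c * (1 + 2^-1 * ((Cst s t + 2 * (HG x s + HG x t)) + (Cst s t + 2 * (HG w s + HG w t)))))); last first.
  move=> w xw; rewrite /gE set2_sum //; apply/eqP => h; by rewrite h e_irr in xw.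
rewrite -big_distrr /= (@sum_aff x _ (1 + 2^-1 * (Cst s t + 2 * (HG x s + HG x t)) + 2^-1 * Cst s t) 1
    (fun w => HG w s + HG w t)); last by move=> w; field.
rewrite big_split /= !LapG.
have gP : gE s t [set s; t] = (2 * k * num_edges e)%:R.
  rewrite /gE set2_sum // (@hit_b R T e s e_conn) (@hit_b R T e t e_conn) /Cst; by field.
rewrite gP Dsum_eq.
have hx2 : (x \in [set s; t])%:R = (x == s)%:R + (x == t)%:R :> R.
  rewrite !inE; have [->|xs] := eqVneq x s; first by rewrite (negbTE st) addr0.
  by case: (x == t); rewrite ?add0r ?addr0.
rewrite hx2 /c.
have := dp x; move: (dG x) => d dn.
rewrite !natrM.
move: ((x == s)%:R : R) ((x == t)%:R : R) (HG x s) (HG x t) (Cst s t) => a b hs ht C.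
by field; rewrite kp dn.
Qed.

End GraphH.

Theorem theorem4p2 (R : realType) (T : finType) (e : rel T)
  (e_sym : symmetric e) (e_irr : irreflexive e)
  (e_conn : forall x y : T, connect e x y)
  (k : nat) (k_pos : (0 < k)%N) :
  let S := @Sk_adj T e k in
  let m := num_edges e in
  let HG := @hitting_time R T e in
  let HS := @hitting_time R (SkV e k) S in
  (* (1) *)
  (forall u v : T, u != v -> HS (inl u) (inl v) = 4 * HG u v) /\
  (* (2) *)
  (forall (p : edgeT e * 'I_k) (v s t : T), s != t ->
     (forall x, S (inr p) x = (x == inl s) || (x == inl t)) ->
     HS (inr p) (inl v) = 1 + 2 * HG s v + 2 * HG t v /\
     HS (inl v) (inr p) = (2 * k * m)%:R - 1 + 2 * (HG v s + HG v t)
                          - (HG t s + HG s t)) /\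
  (* (3) *)
  (forall (p1 p2 : edgeT e * 'I_k) (s t p q : T), p1 != p2 -> s != t -> p != q ->
     (forall x, S (inr p1) x = (x == inl s) || (x == inl t)) ->
     (forall x, S (inr p2) x = (x == inl p) || (x == inl q)) ->
     HS (inr p1) (inr p2) = (2 * k * m)%:R + HG s p + HG s q + HG t p + HG t q
                            - HG q p - HG p q /\
     HS (inr p2) (inr p1) = (2 * k * m)%:R + HG p s + HG q s + HG p t + HG q t
                            - HG t s - HG s t).
Proof.
move=> S m HG HS; rewrite /HS /HG /S /m.
have P1 := @part1 R T e e_sym e_irr e_conn k k_pos.
have P2 := @part2 R T e e_sym e_irr e_conn k k_pos.
split; [|split].
- by move=> u v uv; rewrite (P1 v u v uv (inl u)).
- move=> p v s t st hp; have hP := @endpoints T e k p s t hp; split.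
    by rewrite (P1 v s t st (inr p)) /= hP (@set2_sum R T _ s t st); ring.
  by rewrite (P2 s t p st hP (inl v)) /= /Cst; ring.
move=> p1 p2 s t p q p12 st pq h1 h2.
have hP1 := @endpoints T e k p1 s t h1; have hP2 := @endpoints T e k p2 p q h2.
split.
  rewrite (P2 p q p2 pq hP2 (inr p1)) /= (negbTE p12) /gE hP1 (@set2_sum R T _ s t st) /Cst.
  by field.
rewrite (P2 s t p1 st hP1 (inr p2)) /= eq_sym (negbTE p12) /gE hP2 (@set2_sum R T _ p q pq) /Cst.
by field.
Qed.
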